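(* Let $R$ be a ring with unity and involution $*$, and let $a,b,c\in R$. The following statements are equivalent. (1) $a$ is left dual $(b,c)$-core invertible. (2) $a$ is left $(b,c)$-invertible and $b$ is $\{1,4\}$-invertible. (3) $a$ is left $(b,c)$-invertible and $ab$ is $\{1,4\}$-invertible. (4) $a$ is left $(b,c)$-invertible and $cab$ is $\{1,4\}$-invertible. In this case, for any left $(b,c)$-inverse $a_l^{(b,c)}$ of $a$ and any $\{1,4\}$-inverses $b^{(1,4)}$, $(ab)^{(1,4)}$, $(cab)^{(1,4)}$ of $b$, $ab$, $cab$ respectively, each of the elements $b^{(1,4)}a_l^{(b,c)}$, $(ab)^{(1,4)}a\,a_l^{(b,c)}$ and $(cab)^{(1,4)}c$ is a left dual $(b,c)$-core inverse of $a$.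
   Context: An element $a\in R$ is called left dual $(b,c)$-core invertible if there exists $x\in Rc$ such that $bxab=b$ and $(xab)^*=xab$; such an $x$ is called a left dual $(b,c)$-core inverse of $a$. The element $a$ is left $(b,c)$-invertible if $b\in Rcab$, equivalently there exists $x\in Rc$ with $xab=b$; any such $x$ is a left $(b,c)$-inverse of $a$, denoted $a_l^{(b,c)}$. An element $y$ is $\{1,4\}$-invertible if there exists $z$ with $yzy=y$ and $(zy)^*=zy$; such $z$ is a $\{1,4\}$-inverse of $y$. *)

(* Defs.v *)
From mathcomp Require Import all_boot all_algebra.
Set Implicit Arguments. Unset Strict Implicit. Unset Printing Implicit Defensive.
Import GRing.Theory.
Local Open Scope ring_scope.

Definition involution (R : pzRingType) (star : R -> R) : Prop :=
  [/\ forall x y : R, star (x + y) = star x + star y,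
      forall x y : R, star (x * y) = star y * star x
    & forall x : R, star (star x) = x].

Definition left_dual_bc_core_inverse (R : pzRingType) (star : R -> R)
  (a b c x : R) : Prop :=
  (exists r : R, x = r * c) /\ b * x * a * b = b /\ star (x * a * b) = x * a * b.

Definition left_dual_bc_core_invertible (R : pzRingType) (star : R -> R)
  (a b c : R) : Prop :=
  exists x : R, left_dual_bc_core_inverse star a b c x.

Definition left_bc_invertible (R : pzRingType) (a b c : R) : Prop :=
  exists r : R, b = r * (c * a * b).

Definition left_bc_inverse (R : pzRingType) (a b c x : R) : Prop :=
  (exists r : R, x = r * c) /\ x * a * b = b.

Definition inv14 (R : pzRingType) (star : R -> R) (y z : R) : Prop :=
  y * z * y = y /\ star (z * y) = z * y.

Definition invertible14 (R : pzRingType) (star : R -> R) (y : R) : Prop :=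
  exists z : R, inv14 star y z.

(* Main.v *)
Require Import Defs.
From mathcomp Require Import all_boot all_algebra.
Local Open Scope ring_scope.
Import GRing.Theory.

Lemma part4 (R : pzRingType) (star : R -> R) (a b c : R) (x : R) :
  left_bc_inverse a b c x ->
     (forall z : R, inv14 star b z ->
        left_dual_bc_core_inverse star a b c (z * x)) /\
     (forall z : R, inv14 star (a * b) z ->
        left_dual_bc_core_inverse star a b c (z * a * x)) /\
     (forall z : R, inv14 star (c * a * b) z ->
        left_dual_bc_core_inverse star a b c (z * c)).
Proof.
move=> [[r ->] hx].
have hx' : r * c * a * b = b by [].
clear hx.
split; [|split] => z [h1 h2].
- split; first by exists (z * r); rewrite !mulrA.
  have e : b * (z * (r * c)) * a * b = b * z * (r * c * a * b) by rewrite !mulrA.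
  have e2 : z * (r * c) * a * b = z * (r * c * a * b) by rewrite !mulrA.
  by rewrite e e2 hx' h1.
- have hb : b * z * a * b = b.
    transitivity (r*c*(a*b*z*(a*b))); first by rewrite !mulrA hx'.
    by rewrite h1 !mulrA hx'.
  have e : b * (z * a * (r * c)) * a * b = b * z * a * (r * c * a * b) by rewrite !mulrA.
  have e2 : z * a * (r * c) * a * b = z * a * (r * c * a * b) by rewrite !mulrA.
  split; first by exists (z * a * r); rewrite !mulrA.
  by rewrite e e2 hx' hb -mulrA h2 mulrA.
- have hb : b * (z * c) * a * b = b.
    transitivity (r*(c*a*b*z*(c*a*b))); first by rewrite !mulrA hx'.
    by rewrite h1 !mulrA hx'.
  have e2 : z * c * a * b = z * (c * a * b) by rewrite !mulrA.
  split; first by exists z.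
  by rewrite hb e2 h2.
Qed.

Theorem theorem2p6 (R : pzRingType) (star : R -> R) (a b c : R) :
  involution star ->
  (left_dual_bc_core_invertible star a b c <->
     left_bc_invertible a b c /\ invertible14 star b) /\
  (left_dual_bc_core_invertible star a b c <->
     left_bc_invertible a b c /\ invertible14 star (a * b)) /\
  (left_dual_bc_core_invertible star a b c <->
     left_bc_invertible a b c /\ invertible14 star (c * a * b)) /\
  (forall x : R, left_bc_inverse a b c x ->
     (forall z : R, inv14 star b z ->
        left_dual_bc_core_inverse star a b c (z * x)) /\
     (forall z : R, inv14 star (a * b) z ->
        left_dual_bc_core_inverse star a b c (z * a * x)) /\
     (forall z : R, inv14 star (c * a * b) z ->
        left_dual_bc_core_inverse star a b c (z * c))).
Proof.
move=> _.
have inv1 : left_dual_bc_core_invertible star a b c -> left_bc_invertible a b c.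
  move=> [x [[r hr] [h1 h2]]]; exists (b * r).
  rewrite -[in LHS]h1 hr. by rewrite !mulrA.
have lbi : left_bc_invertible a b c -> exists x, left_bc_inverse a b c x.
  move=> [r hr]; exists (r * c); split; first by exists r.
  by rewrite [in RHS]hr !mulrA.
split; [|split; [|split]]; last exact: (@part4 R star a b c).
- split.
    move=> H; split; first exact: inv1.
    case: H => x [_ [h1 h2]]; exists (x * a); split; by rewrite ?mulrA.
  move=> [/lbi [x Hx] [z Hz]]; exists (z * x).
  by case: (@part4 R star a b c x Hx) => [H _]; apply: H.
- split.
    move=> H; split; first exact: inv1.
    case: H => x [_ [h1 h2]]; exists x; split; last by rewrite mulrA.
    by have := congr1 (fun t => a * t) h1; rewrite /= !mulrA.
  move=> [/lbi [x Hx] [z Hz]]; exists (z * a * x).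
  by case: (@part4 R star a b c x Hx) => [_ [H _]]; apply: H.
- split.
    move=> H; split; first exact: inv1.
    case: H => x [[r hr] [h1 h2]]; exists r; split.
      by rewrite hr in h1; have := congr1 (fun t => c * a * t) h1; rewrite /= !mulrA.
    by rewrite hr in h2; rewrite !mulrA.
  move=> [/lbi [x Hx] [z Hz]]; exists (z * c).
  by case: (@part4 R star a b c x Hx) => [_ [_ H]]; apply: H.
Qed.
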